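(* Any bandit-feedback learning algorithm for episodic MDPs with $k=2$ levels, horizon length $H$ and $A$ actions has expected regret $\Omega\left(\min\left\{\sqrt{ A^H T} \,,\, T\right\}\right)$ over $T$ episodes; that is, there is an absolute constant $c>0$ such that for every such algorithm there is an MDP instance with $k=2$ on which its expected regret is at least $c\min\{\sqrt{A^HT},T\}$.
   Context: An episodic MDP has states $(l,i)$ for levels $l\in[k]$ and stages $i\in[H]$, start state $(1,1)$, and action set $\mathcal{A}$ of size $A$. For $i\in[H-1]$, action $a$ at $(l,i)$ moves to $(s,i+1)$ with probability $p_i(s\mid l,a)$. Action $a$ at $(l,i)$ yields a random reward $R_{l,i}(a)\ge0$ with mean $r_{l,i}(a)$, and the total reward of any execution lies in $[0,1]$. A deterministic policy is a matrix $(\pi_{l,i})$ of actions; its value $V(\Pi)$ is its expected total reward, and $\mathsf{Opt}$ is the maximum value. Bandit-feedback learning: transitions and rewards are unknown; in each of $T$ episodes the learner chooses a policy $\pi^t$ based on past observations, executes it once, and observes only the total reward of the episode (not the visited states nor per-step rewards). Regret is $\sum_{t=1}^T(\mathsf{Opt}-V(\pi^t))$; expected regret is its expectation. *)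

(* Defs.v *)
From HB Require Import structures.
From mathcomp Require Import all_boot all_order all_algebra.
From mathcomp Require Import reals.
Set Implicit Arguments. Unset Strict Implicit. Unset Printing Implicit Defensive.
Import Order.TTheory GRing.Theory Num.Theory.
Local Open Scope ring_scope.

(* Episodic MDP with k = 2 levels ('I_2, ord0 = level 1), H stages ('I_H),
   A actions ('I_A).  Start state = (level ord0, stage 0).
   trans i l a s = p_i(s | l, a)   (used for i < H-1).
   rew l i a = finitely supported law of R_{l,i}(a), as a list of
   (value, probability) pairs. *)
Record mdp (R : realType) (H A : nat) := Mdp {
  trans : 'I_H -> 'I_2 -> 'I_A -> 'I_2 -> R;
  rew   : 'I_2 -> 'I_H -> 'I_A -> seq (R * R)
}.

Section Defs.
Variables (R : realType) (H A : nat).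

Definition policy := {ffun 'I_2 * 'I_H -> 'I_A}.

Definition valid_mdp (M : mdp R H A) : Prop :=
  [/\ (forall i l a s, 0 <= trans M i l a s),
      (forall i l a, \sum_(s : 'I_2) trans M i l a s = 1),
      (forall l i a, all (fun x : R * R => (0 <= x.1) && (0 <= x.2)) (rew M l i a)),
      (forall l i a, \sum_(x <- rew M l i a) x.2 = 1) &
      (forall (path : {ffun 'I_H -> 'I_2}) (acts : {ffun 'I_H -> 'I_A})
              (x : {ffun 'I_H -> R * R}),
          (forall i, x i \in rew M (path i) i (acts i)) ->
          0 <= \sum_(i : 'I_H) (x i).1 <= 1)].

(* law of a sum of two independent finitely supported variables *)
Definition conv (d1 d2 : seq (R * R)) : seq (R * R) :=
  [seq (x.1 + y.1, x.2 * y.2) | x <- d1, y <- d2].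

Definition path_prob (M : mdp R H A) (pi : policy) (path : {ffun 'I_H -> 'I_2}) : R :=
  \prod_(j : 'I_H)
     (if (j : nat) == 0%N then ((path j == ord0) : nat)%:R
      else let j' := ord_pred j in
           trans M j' (path j') (pi (path j', j')) (path j)).

Definition rew_dist (M : mdp R H A) (pi : policy) (path : {ffun 'I_H -> 'I_2}) : seq (R * R) :=
  foldr (fun i acc => conv (rew M (path i) i (pi (path i, i))) acc)
        [:: (0, 1)] (enum 'I_H).

Definition episode_dist (M : mdp R H A) (pi : policy) : seq (R * R) :=
  flatten [seq [seq (x.1, path_prob M pi path * x.2) | x <- rew_dist M pi path]
          | path <- enum {: {ffun 'I_H -> 'I_2}}].

Definition value (M : mdp R H A) (pi : policy) : R :=
  \sum_(x <- episode_dist M pi) x.1 * x.2.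

Definition Opt (M : mdp R H A) : R := \big[Num.max/0]_(pi : policy) value M pi.

(* A (possibly randomized) bandit-feedback learner: given the history of
   (policy played, observed total reward) pairs, a probability distribution
   over the next policy. *)
Definition algorithm := seq (policy * R) -> policy -> R.

Definition valid_alg (alg : algorithm) : Prop :=
  forall h, (forall pi, 0 <= alg h pi) /\ \sum_(pi : policy) alg h pi = 1.

Fixpoint exp_regret (M : mdp R H A) (alg : algorithm) (t : nat) (h : seq (policy * R)) : R :=
  match t with
  | 0 => 0
  | t'.+1 => \sum_(pi : policy) alg h pi *
              ((Opt M - value M pi) +
               \sum_(x <- episode_dist M pi) x.2 * exp_regret M alg t' (rcons h (pi, x.1)))
  end.

End Defs.

(* Main.v *)
Require Import Defs.
From HB Require Import structures.
From mathcomp Require Import all_boot all_order all_algebra.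
From mathcomp Require Import reals.
From mathcomp Require Import ring lra.
Set Implicit Arguments. Unset Strict Implicit. Unset Printing Implicit Defensive.
Import Order.TTheory GRing.Theory Num.Theory.
Local Open Scope ring_scope.

Section Bandit.
Variables (R : realType) (P : finType) (alg : seq (P * R) -> P -> R).
Hypothesis alg_ge0 : forall h a, 0 <= alg h a.
Hypothesis alg_sum1 : forall h, \sum_a alg h a = 1.

Definition bern (m : R) (b : bool) : R := if b then m else 1 - m.

Lemma bern_sum m : \sum_(b : bool) bern m b = 1.
Proof. by rewrite big_bool /=; ring. Qed.

Fixpoint cum (mu : P -> R) (c : P -> R) (t : nat) (h : seq (P * R)) : R :=
  match t with
  | 0 => 0
  | t'.+1 => \sum_a alg h a * (c a + \sum_(b : bool) bern (mu a) b * cum mu c t' (rcons h (a, (b : nat)%:R)))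
  end.

Lemma cum_affine mu c al be t h :
  cum mu (fun a => al + be * c a) t h = al * t%:R + be * cum mu c t h.
Proof.
elim: t h => [|t IH] h /=; first by rewrite !mulr0 addr0.
have E : forall a, alg h a * (al + be * c a + \sum_(b : bool) bern (mu a) b *
        cum mu (fun a0 : P => al + be * c a0) t (rcons h (a, (b : nat)%:R)))
   = al * (t.+1)%:R * alg h a + be * (alg h a * (c a + \sum_(b : bool) bern (mu a) b * cum mu c t (rcons h (a, (b : nat)%:R))))
     + (al * alg h a * t%:R) * (1 - \sum_(b : bool) bern (mu a) b).
  move=> a; rewrite (eq_bigr (fun b => bern (mu a) b * (al * t%:R + be * cum mu c t (rcons h (a, (b : nat)%:R))))); last by move=> b _; rewrite IH.
  rewrite !big_bool /= -natr1; ring.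
rewrite (eq_bigr _ (fun a _ => E a)) big_split /= big_split /= -mulr_sumr -mulr_sumr alg_sum1.
rewrite [X in _ + X]big1 ?addr0 ?mulr1 //.
by move=> a _; rewrite bern_sum subrr mulr0.
Qed.

Lemma cum_ext mu c1 c2 t h : (forall a, c1 a = c2 a) -> cum mu c1 t h = cum mu c2 t h.
Proof.
move=> E; elim: t h => [|t IH] h //=; apply: eq_bigr => a _; rewrite E; congr (_ * (_ + _)).
by apply: eq_bigr => b _; rewrite IH.
Qed.

Lemma cum_sum (S : finType) mu (F : S -> P -> R) t h :
  cum mu (fun a => \sum_s F s a) t h = \sum_s cum mu (F s) t h.
Proof.
elim: t h => [|t IH] h /=; first by rewrite big1.
rewrite exchange_big /=; apply: eq_bigr => a _.
rewrite -mulr_sumr big_split /=; congr (_ * (_ + _)).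
rewrite (eq_bigr (fun b => \sum_s bern (mu a) b * cum mu (F s) t (rcons h (a, (b : nat)%:R)))); last by move=> b _; rewrite IH mulr_sumr.
by rewrite exchange_big.
Qed.


Variables (mus mu0 : P -> R) (isS : P -> bool).
Hypothesis mus01 : forall a, 0 <= mus a <= 1.
Hypothesis mu001 : forall a, 0 <= mu0 a <= 1.

Lemma bern_ge0 m b : 0 <= m <= 1 -> 0 <= bern m b.
Proof. by case/andP=> h0 h1; case: b => /=; rewrite ?subr_ge0. Qed.

Definition ind a : R := (isS a : nat)%:R.

Fixpoint J t h (p q : R) (n : nat) (Psi : R -> R -> nat -> R) : R :=
  match t with
  | 0 => Psi p q n
  | t'.+1 => \sum_a \sum_(b : bool) J t' (rcons h (a, (b : nat)%:R))
               (p * alg h a * bern (mus a) b) (q * alg h a * bern (mu0 a) b) (n + isS a) Psi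
  end.

Lemma J_lin t h p q n x y Psi1 Psi2 :
  J t h p q n (fun p q n => x * Psi1 p q n + y * Psi2 p q n)
  = x * J t h p q n Psi1 + y * J t h p q n Psi2.
Proof.
elim: t h p q n => [|t IH] h p q n //=.
rewrite !mulr_sumr -big_split /=; apply: eq_bigr => a _.
rewrite !mulr_sumr -big_split /=; apply: eq_bigr => b _.
by rewrite IH.
Qed.

Lemma J_mono t h p q n Psi1 Psi2 : 0 <= p -> 0 <= q ->
  (forall p q m, 0 <= p -> 0 <= q -> (m <= n + t)%N -> Psi1 p q m <= Psi2 p q m) ->
  J t h p q n Psi1 <= J t h p q n Psi2.
Proof.
elim: t h p q n => [|t IH] h p q n hp hq hPsi /=; first by apply: hPsi; rewrite ?addn0.
apply: ler_sum => a _; apply: ler_sum => b _; apply: IH.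
- by rewrite mulr_ge0 ?mulr_ge0 ?bern_ge0.
- by rewrite mulr_ge0 ?mulr_ge0 ?bern_ge0.
move=> p' q' m hp' hq' hm; apply: hPsi => //.
by apply: leq_trans hm _; rewrite -addnA leq_add2l; case: (isS a); rewrite ?add0n ?add1n.
Qed.

Lemma J_p t h p q n :
  J t h p q n (fun p _ n => p * n%:R) = p * (n%:R + cum mus ind t h).
Proof.
elim: t h p q n => [|t IH] h p q n /=; first by rewrite addr0.
have E : forall a, \sum_(b : bool) J t (rcons h (a, (b : nat)%:R))
    (p * alg h a * bern (mus a) b) (q * alg h a * bern (mu0 a) b) (n + isS a)
    (fun p _ n => p * n%:R)
  = p * (n%:R * alg h a) + p * (alg h a * (ind a + \sum_(b : bool) bern (mus a) b * cum mus ind t (rcons h (a, (b : nat)%:R)))).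
  move=> a; rewrite (eq_bigr (fun b => p * alg h a * bern (mus a) b * ((n + isS a)%:R + cum mus ind t (rcons h (a, (b : nat)%:R))))); last by move=> b _; rewrite IH.
  rewrite !big_bool /= /ind natrD; ring.
rewrite (eq_bigr _ (fun a _ => E a)) big_split /= -!mulr_sumr alg_sum1; ring.
Qed.

Lemma J_q t h p q n :
  J t h p q n (fun _ q n => q * n%:R) = q * (n%:R + cum mu0 ind t h).
Proof.
elim: t h p q n => [|t IH] h p q n /=; first by rewrite addr0.
have E : forall a, \sum_(b : bool) J t (rcons h (a, (b : nat)%:R))
    (p * alg h a * bern (mus a) b) (q * alg h a * bern (mu0 a) b) (n + isS a)
    (fun _ q n => q * n%:R)
  = q * (n%:R * alg h a) + q * (alg h a * (ind a + \sum_(b : bool) bern (mu0 a) b * cum mu0 ind t (rcons h (a, (b : nat)%:R)))).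
  move=> a; rewrite (eq_bigr (fun b => q * alg h a * bern (mu0 a) b * ((n + isS a)%:R + cum mu0 ind t (rcons h (a, (b : nat)%:R))))); last by move=> b _; rewrite IH.
  rewrite !big_bool /= /ind natrD; ring.
rewrite (eq_bigr _ (fun a _ => E a)) big_split /= -!mulr_sumr alg_sum1; ring.
Qed.

Variables (phi : R -> R -> R) (K : R).
Hypothesis phi_hom : forall k x y, 0 <= k -> phi (k * x) (k * y) = k * phi x y.
Hypothesis phi_step : forall p q a, 0 <= p -> 0 <= q ->
  \sum_(b : bool) phi (p * bern (mus a) b) (q * bern (mu0 a) b) <= phi p q + K * q * ind a.
Hypothesis K_ge0 : 0 <= K.

Lemma J_phi t h p q n : 0 <= p -> 0 <= q ->
  J t h p q n (fun p q _ => phi p q) <= phi p q + K * q * cum mu0 ind t h.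
Proof.
elim: t h p q n => [|t IH] h p q n hp hq /=; first by rewrite mulr0 addr0.
apply: (@le_trans _ _ (\sum_a (alg h a * (phi p q + K * q * ind a) +
   K * q * (alg h a * \sum_(b : bool) bern (mu0 a) b * cum mu0 ind t (rcons h (a, (b : nat)%:R)))))).
  apply: ler_sum => a _.
  apply: (@le_trans _ _ (\sum_(b : bool) (alg h a * phi (p * bern (mus a) b) (q * bern (mu0 a) b) +
       K * q * (alg h a * (bern (mu0 a) b * cum mu0 ind t (rcons h (a, (b : nat)%:R))))))).
    apply: ler_sum => b _.
    have -> : alg h a * phi (p * bern (mus a) b) (q * bern (mu0 a) b) =
       phi (p * alg h a * bern (mus a) b) (q * alg h a * bern (mu0 a) b).
      by rewrite -phi_hom // !mulrA ![alg h a * _]mulrC.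
    have -> : K * q * (alg h a * (bern (mu0 a) b * cum mu0 ind t (rcons h (a, (b : nat)%:R))))
       = K * (q * alg h a * bern (mu0 a) b) * cum mu0 ind t (rcons h (a, (b : nat)%:R)) by ring.
    apply: IH; by rewrite mulr_ge0 ?mulr_ge0 ?bern_ge0.
  rewrite big_split /= -mulr_sumr -mulr_sumr -mulr_sumr lerD2r.
  by rewrite ler_wpM2l // phi_step.
have E1 : phi p q = \sum_a alg h a * phi p q by rewrite -mulr_suml alg_sum1 mul1r.
rewrite [X in _ <= _ + X]mulr_sumr [X in _ <= X + _]E1 -big_split /=.
apply: ler_sum => a _; rewrite le_eqVlt; apply/orP; left; apply/eqP; ring.
Qed.

End Bandit.

Section Phi.
Variable R : realType.
Definition phi (x y : R) := (x - y) ^+ 2 / (x + y).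

Lemma phi_hom k x y : phi (k * x) (k * y) = k * phi x y.
Proof.
rewrite /phi; have [->|k0] := eqVneq k 0; first by rewrite !mul0r subrr expr0n /= mul0r.
rewrite -mulrBr -mulrDr exprMn invfM.
have [->|s0] := eqVneq (x + y) 0; first by rewrite !invr0 !mulr0.
rewrite expr2; field; by rewrite k0 s0.
Qed.

Lemma phi_core p q e : 0 <= p -> 0 <= q -> 0 <= e -> e <= 1/4 ->
  phi (p * (1/2 + e)) (q * (1/2)) + phi (p * (1 - (1/2 + e))) (q * (1 - 1/2))
  <= phi p q + 32 * e ^+ 2 * q.
Proof.
move=> hp hq he he4.
have [pq0|pq0] := eqVneq (p + q) 0.
  have p0 : p = 0 by lra.
  have q0 : q = 0 by lra.
  have f0 : phi 0 0 = 0 by rewrite /phi addr0 invr0 mulr0.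
  by rewrite p0 q0 !(phi_hom 0) !mul0r mulr0 f0 !addr0.
have pqp : 0 < p + q by rewrite lt_neqAle eq_sym pq0 addr_ge0.
set a := (p + q) / 2.
set b := p * e.
have d1 : 0 < p * (1/2 + e) + q * (1/2) by nra.
have d2 : 0 < p * (1 - (1/2 + e)) + q * (1 - 1/2) by nra.
have E : phi (p * (1/2 + e)) (q * (1/2)) + phi (p * (1 - (1/2 + e))) (q * (1 - 1/2))
   = phi p q + 2 * b^+2 * q^+2 / (a * ((p * (1/2 + e) + q * (1/2)) * (p * (1 - (1/2 + e)) + q * (1 - 1/2)))).
  rewrite /phi /a /b; field.
  rewrite pq0 andbT; apply/andP; split; rewrite gt_eqF //; nra.
rewrite E lerD2l ler_pdivrMr; last by rewrite !mulr_gt0 // /a; lra.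
have ha : 0 < a by rewrite /a; lra.
have hpa : p <= 2 * a by rewrite /a; lra.
have hqa : q <= 2 * a by rewrite /a; lra.
have he2 : e ^+ 2 <= 1/16 by rewrite expr2; nra.
have hp2 : p ^+ 2 <= 4 * a ^+ 2 by rewrite !expr2; nra.
have hpe : p ^+ 2 * e ^+ 2 <= a ^+ 2 / 4.
  apply: (@le_trans _ _ (p ^+ 2 * (1/16))); first by rewrite ler_wpM2l // sqr_ge0.
  lra.
have hq2 : p ^+ 2 * q <= 8 * a ^+ 3.
  apply: (@le_trans _ _ (4 * a ^+ 2 * q)); first by rewrite ler_wpM2r.
  have -> : 8 * a ^+ 3 = 4 * a ^+ 2 * (2 * a) by ring.
  by rewrite ler_wpM2l // mulr_ge0 // sqr_ge0.
have h1 : 2 * p ^+ 2 * q <= 32 * a * (a ^+ 2 - p ^+ 2 * e ^+ 2).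
  have : 0 <= a ^+ 3 by rewrite exprn_ge0 // ltW.
  rewrite (exprS a 2) in hq2 *; nra.
have -> : (p * (1 / 2 + e) + q * (1 / 2)) * (p * (1 - (1 / 2 + e)) + q * (1 - 1 / 2))
   = a ^+ 2 - p ^+ 2 * e ^+ 2 by rewrite /a; field.
have eq0 : 0 <= e ^+ 2 * q by rewrite mulr_ge0 ?sqr_ge0.
have := ler_wpM2l eq0 h1.
rewrite /b; move=> H1; apply: le_trans (le_trans _ H1) _.
  by rewrite le_eqVlt; apply/orP; left; apply/eqP; ring.
by rewrite le_eqVlt; apply/orP; left; apply/eqP; ring.
Qed.
End Phi.

Section MDP.
Variables (R : realType) (H A : nat).
Hypothesis Hpos : (0 < H)%N.
Variables (sec : {ffun 'I_H -> 'I_A}) (e : R).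
Hypotheses (he0 : 0 <= e) (he4 : e <= 1/4).

Fact lstP : (H.-1 < H)%N. Proof. by rewrite ltn_predL. Qed.
Definition lst : 'I_H := Ordinal lstP.

Definition mval (l : 'I_2) (i : 'I_H) (a : 'I_A) : R :=
  if (l == ord0) && (a == sec i) then 1/2 + e else 1/2.
Definition nxt (l : 'I_2) (i : 'I_H) (a : 'I_A) : 'I_2 :=
  if (l == ord0) && (a == sec i) then ord0 else ord_max.

Definition mdpS : mdp R H A :=
  Mdp (fun i l a s => ((s == nxt l i a) : nat)%:R)
      (fun l i a => if i == lst then [:: (1, mval l i a); (0, 1 - mval l i a)] else [:: (0, 1)]).

Lemma mval01 l i a : 0 <= mval l i a <= 1.
Proof. rewrite /mval; case: ifP => _; apply/andP; split. all: try lra. all: move: he0 he4; lra. Qed.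

Lemma valid_mdpS : valid_mdp mdpS.
Proof.
split => /=.
- by move=> *; rewrite ler0n.
- move=> i l a; rewrite (bigD1 (nxt l i a)) //= eqxx big1 ?addr0 //.
  by move=> s /negbTE ->.
- move=> l i a; case: ifP => _ /=; rewrite ?ler01 ?lexx //.
  by case/andP: (mval01 l i a) => -> h1; rewrite subr_ge0 h1.
- move=> l i a; case: ifP => _; rewrite !big_cons big_nil /=; ring.
- move=> path acts x hx.
  have hx0 : forall i, i != lst -> (x i).1 = 0.
    move=> i hi; move: (hx i); rewrite /= (negbTE hi) inE => /eqP -> //.
  rewrite (bigD1 lst) //= big1 ?addr0; last by move=> i /hx0.
  move: (hx lst); rewrite /= eqxx !inE => /orP [] /eqP -> /=; rewrite ?lexx ?ler01 //.
Qed.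

Lemma conv_sum (d1 d2 : seq (R * R)) (G : R -> R) :
  \sum_(z <- conv d1 d2) z.2 * G z.1 = \sum_(x <- d1) x.2 * \sum_(y <- d2) y.2 * G (x.1 + y.1).
Proof.
rewrite /conv big_allpairs_dep /=; apply: eq_bigr => x _; rewrite mulr_sumr.
by apply: eq_bigr => y _; rewrite /= mulrA.
Qed.

Lemma fold_sum (pi : policy H A) (path : {ffun 'I_H -> 'I_2}) (l : seq 'I_H) : uniq l -> forall G : R -> R,
  \sum_(z <- foldr (fun i acc => conv (rew mdpS (path i) i (pi (path i, i))) acc) [:: (0, 1)] l) z.2 * G z.1
  = if lst \in l then \sum_(b : bool) bern (mval (path lst) lst (pi (path lst, lst))) b * G (b : nat)%:R
    else G 0.
Proof.
elim: l => [|i l IH] /=; first by move=> _ G; rewrite big_cons big_nil mul1r addr0.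
case/andP=> il ul G; rewrite conv_sum inE.
case: (eqVneq i lst) => [eil|nil] /=.
  move: il; rewrite eil => il; rewrite !big_cons big_nil /= addr0.
  have := IH ul (fun v => G (1 + v)); rewrite /= (negbTE il) => ->.
  have := IH ul (fun v => G (0 + v)); rewrite /= (negbTE il) => ->.
  by rewrite big_bool /= -eil !addr0.
rewrite big_cons big_nil /= mul1r addr0.
have := IH ul (fun v => G (0 + v)); rewrite /= => ->.
case: ifP => _; [by under eq_bigr do rewrite add0r | by rewrite addr0].
Qed.


Definition good (pi : policy H A) : bool := [forall i : 'I_H, pi (ord0, i) == sec i].
Definition pg (pi : policy H A) (j : nat) : bool :=
  [forall i : 'I_H, (i < j)%N ==> (pi (ord0, i) == sec i)].
Definition ipath (pi : policy H A) : {ffun 'I_H -> 'I_2} :=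
  [ffun j : 'I_H => if pg pi j then ord0 else ord_max].

Lemma pg0 pi : pg pi 0.
Proof. by apply/forallP. Qed.

Lemma pgS pi (i : 'I_H) : pg pi i.+1 = pg pi i && (pi (ord0, i) == sec i).
Proof.
apply/forallP/andP => [Hk | [/forallP Hk Hi] k].
  split; last exact: (implyP (Hk i)) (ltnSn i).
  by apply/forallP => k; apply/implyP => hk; apply: (implyP (Hk k)); rewrite ltnS ltnW.
apply/implyP; rewrite ltnS leq_eqVlt => /orP [/eqP kv | kl].
  by have -> : k = i by apply: val_inj.
exact: (implyP (Hk k)) kl.
Qed.

Lemma good_pg pi : good pi = pg pi H.
Proof.
apply/forallP/forallP => Hk k; first by apply/implyP => _; exact: Hk.
exact: (implyP (Hk k)) (ltn_ord k).
Qed.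

Lemma ord_pred_val (j : 'I_H) : (0 < j)%N -> val (ord_pred j) = j.-1.
Proof.
case: j => [[|j] hj] //= _.
by rewrite modnDr modn_small // ltnW.
Qed.

Lemma ipath_rec pi (j : 'I_H) : (0 < j)%N ->
  ipath pi j = nxt (ipath pi (ord_pred j)) (ord_pred j) (pi (ipath pi (ord_pred j), ord_pred j)).
Proof.
move=> hj; set j' := ord_pred j.
have ej : (j : nat) = j'.+1 by rewrite /j' ord_pred_val // prednK.
rewrite /nxt !ffunE ej pgS; case: (pg pi j') => //=; by rewrite eqxx.
Qed.

Lemma pp_ipath pi : path_prob mdpS pi (ipath pi) = 1.
Proof.
rewrite /path_prob big1 // => j _; case: ifP => [/eqP j0 | /negbT j0].
  by rewrite ffunE j0 pg0 eqxx.
by rewrite /= -ipath_rec ?eqxx // lt0n.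
Qed.

Lemma pp_other pi path : path != ipath pi -> path_prob mdpS pi path = 0.
Proof.
move=> hne.
have /existsP [j0 hj0] : [exists j, path j != ipath pi j].
  apply: contraR hne => /existsPn H0; apply/eqP/ffunP => j; apply/eqP.
  by move: (H0 j); rewrite negbK.
case: (@arg_minnP _ j0 (fun j => path j != ipath pi j) (fun j : 'I_H => nat_of_ord j) hj0) => j hj hmin.
rewrite /path_prob (bigD1 j) //= [X in X * _](_ : _ = 0) ?mul0r //.
case: ifP => [/eqP j0' | /negbT j0'].
  by move: hj; rewrite ffunE j0' pg0 => /negbTE ->.
have hj' : path (ord_pred j) = ipath pi (ord_pred j).
  apply/eqP; case: eqP => // /eqP hne'; have := hmin _ hne'.
  by rewrite ord_pred_val ?lt0n // leqNgt ltn_predL lt0n j0'.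
by rewrite /= hj' -ipath_rec ?lt0n // (negbTE hj).
Qed.

Definition mu (pi : policy H A) : R := if good pi then 1/2 + e else 1/2.

Lemma mval_ipath pi : mval (ipath pi lst) lst (pi (ipath pi lst, lst)) = mu pi.
Proof.
have E : pg pi H = pg pi lst && (pi (ord0, lst) == sec lst) by rewrite -pgS /= prednK.
rewrite /mval /mu good_pg E ffunE; case: (pg pi lst) => //=; by rewrite eqxx.
Qed.

Lemma episode_sum pi (F : R -> R) :
  \sum_(x <- episode_dist mdpS pi) x.2 * F x.1 = \sum_(b : bool) bern (mu pi) b * F (b : nat)%:R.
Proof.
rewrite /episode_dist big_flatten /= big_map.
transitivity (\sum_(path <- enum {: {ffun 'I_H -> 'I_2}}) path_prob mdpS pi path *
   \sum_(b : bool) bern (mval (path lst) lst (pi (path lst, lst))) b * F (b : nat)%:R).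
  apply: eq_bigr => path _; rewrite big_map /=.
  have E := fold_sum pi path (enum_uniq 'I_H) F.
  rewrite mem_enum in E.
  have T1 : lst \in 'I_H by [].
  rewrite T1 in E; rewrite -E mulr_sumr; apply: eq_bigr => x _; by rewrite /= mulrA.
rewrite big_enum /= (bigD1 (ipath pi)) //= pp_ipath mul1r [X in _ + X]big1 ?addr0 ?mval_ipath //.
by move=> path hp; rewrite pp_other ?mul0r.
Qed.

Lemma value_mdpS pi : value mdpS pi = mu pi.
Proof.
rewrite /value; apply: etrans (etrans (episode_sum pi (fun v => v)) _).
  by apply: eq_bigr => x _; rewrite mulrC.
rewrite big_bool /=; ring.
Qed.

Definition pi0 : policy H A := [ffun x : 'I_2 * 'I_H => sec x.2].

Lemma good_pi0 : good pi0.
Proof. by apply/forallP => i; rewrite ffunE. Qed.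

Lemma Opt_mdpS : Opt mdpS = 1/2 + e.
Proof.
apply/eqP; rewrite eq_le; apply/andP; split.
  apply: bigmax_le => [|pi _]; first by move: he0; lra.
  rewrite value_mdpS /mu; case: ifP => _; move: he0; lra.
have <- : value mdpS pi0 = 1/2 + e by rewrite value_mdpS /mu good_pi0.
exact: le_bigmax.
Qed.

Lemma exp_regret_cum (alg : algorithm R H A) t h :
  exp_regret mdpS alg t h = cum alg mu (fun pi => e * (1 - ((good pi : nat)%:R))) t h.
Proof.
elim: t h => [|t IH] h //=; apply: eq_bigr => pi _; congr (_ * (_ + _)).
  by rewrite Opt_mdpS value_mdpS /mu; case: (good pi) => /=; ring.
apply: etrans (episode_sum pi (fun v => exp_regret mdpS alg t (rcons h (pi, v)))) _.
by apply: eq_bigr => b _; rewrite IH.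
Qed.

End MDP.

Lemma per_s (R : realType) (H A T : nat) (alg : algorithm R H A) (e : R) (s : {ffun 'I_H -> 'I_A}) :
  (forall h a, 0 <= alg h a) -> (forall h, \sum_a alg h a = 1) -> 0 <= e -> e <= 1/4 ->
  forall X Y, X = cum alg (mu s e) (ind R (good s)) T [::] ->
  Y = cum alg (fun _ => 1/2) (ind R (good s)) T [::] ->
  X - Y <= 64 * T%:R * e ^+ 2 * Y + (X + Y) / 8.
Proof.
move=> alg_ge0 alg_sum1 e0 e4 X Y EX EY.
have mus01 : forall a, 0 <= mu s e a <= 1.
  by move=> a; rewrite /mu; case: ifP => _; apply/andP; split; move: e0 e4; lra.
have mu001 : forall a : policy H A, 0 <= (fun _ => 1/2 : R) a <= 1.
  by move=> a; apply/andP; split; lra.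
have phi_step : forall p q a, 0 <= p -> 0 <= q ->
  \sum_(b : bool) phi (p * bern (mu s e a) b) (q * bern ((fun _ => 1/2 : R) a) b)
    <= phi p q + (32 * e ^+ 2) * q * ind R (good s) a.
  move=> p q a hp hq; rewrite big_bool /= /ind /mu.
  case: ifP => _ /=.
    by rewrite mulr1 phi_core.
  rewrite mulr0 addr0 ![p * _]mulrC ![q * _]mulrC !phi_hom.
  by rewrite le_eqVlt; apply/orP; left; apply/eqP; ring.
have Hphi := @J_phi _ _ _ alg_ge0 alg_sum1 (mu s e) (fun _ => 1/2) (good s) mus01 mu001 _ _ (fun k x y _ => @phi_hom R k x y) phi_step T [::] 1 1 0 ler01 ler01.
set mu0 := (fun _ : policy H A => 1/2 : R).
have L1 : J alg (mu s e) mu0 (good s) T [::] 1 1 0 (fun p q n => 1 * (p * n%:R) + (-1) * (q * n%:R)) = X - Y.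
  rewrite (J_lin alg (mu s e) mu0 (good s) T [::] 1 1 0 1 (-1) (fun p q n => p * n%:R) (fun p q n => q * n%:R)).
  rewrite (J_p alg_sum1) (J_q alg_sum1) EX EY; ring.
have L2 : J alg (mu s e) mu0 (good s) T [::] 1 1 0 (fun p q n => (2 * T%:R) * phi p q + (1/8) * (1 * (p * n%:R) + 1 * (q * n%:R)))
   <= 64 * T%:R * e ^+ 2 * Y + (X + Y) / 8.
  rewrite (J_lin alg (mu s e) mu0 (good s) T [::] 1 1 0 (2 * T%:R) (1/8) (fun p q n => phi p q) (fun p q n => 1 * (p * n%:R) + 1 * (q * n%:R))).
  rewrite (J_lin alg (mu s e) mu0 (good s) T [::] 1 1 0 1 1 (fun p q n => p * n%:R) (fun p q n => q * n%:R)).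
  rewrite (J_p alg_sum1) (J_q alg_sum1) -EX -EY.
  have f11 : phi 1 1 = 0 :> R by rewrite /phi subrr expr0n /= mul0r.
  have HJ : J alg (mu s e) mu0 (good s) T [::] 1 1 0 (fun p q n => phi p q) <= 32 * e ^+ 2 * Y.
    apply: le_trans Hphi _; rewrite f11 add0r mulr1 EY; exact: lexx.
  have hT : 0 <= 2 * T%:R :> R by rewrite mulr_ge0 ?ler0n.
  have := ler_wpM2l hT HJ.
  set j := J _ _ _ _ _ _ _ _ _ _; move=> H1.
  have -> : 64 * T%:R * e ^+ 2 * Y + (X + Y) / 8 = 2 * T%:R * (32 * e ^+ 2 * Y) + 1 / 8 * (1 * (1 * (0 + X)) + 1 * (1 * (0 + Y))) by ring.
  by rewrite lerD2r.
rewrite -L1; apply: le_trans L2.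
apply: (@J_mono _ _ alg alg_ge0 (mu s e) mu0 (good s) mus01 mu001 T [::] 1 1 0) => // p q m hp hq hm.
rewrite add0n in hm.
clear mus01 mu001 phi_step Hphi L1 alg_ge0 alg_sum1 EX EY.
have hmT : (m%:R : R) <= T%:R by rewrite ler_nat.
have hm0 : 0 <= m%:R :> R by rewrite ler0n.
have f00 : phi 0 0 = 0 :> R by rewrite /phi subrr addr0 invr0 mulr0.
have [pq0|pq0] := eqVneq (p + q) 0.
  have p0 : p = 0 by lra.
  have q0 : q = 0 by lra.
  rewrite p0 q0 f00; lra.
have spos : 0 < p + q by rewrite lt_neqAle eq_sym pq0 addr_ge0.
have key : (p - q) * (p + q) <= 2 * (p - q) ^+ 2 + (p + q) ^+ 2 / 8.
  rewrite -subr_ge0.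
  have -> : 2 * (p - q) ^+ 2 + (p + q) ^+ 2 / 8 - (p - q) * (p + q) = (4 * (p - q) - (p + q)) ^+ 2 / 8 by field.
  by rewrite divr_ge0 ?sqr_ge0.
have key2 : p - q <= 2 * phi p q + (p + q) / 8.
  rewrite -(ler_pM2r spos); apply: le_trans key _.
  by rewrite le_eqVlt; apply/orP; left; apply/eqP; rewrite /phi; field; rewrite gt_eqF.
have phi0 : 0 <= phi p q by rewrite /phi divr_ge0 ?sqr_ge0 ?addr_ge0.
have := ler_wpM2r hm0 key2.
have := ler_wpM2l phi0 hmT.
lra.
Qed.

Lemma sum_good (R : realType) (H A : nat) (a : policy H A) :
  \sum_(s : {ffun 'I_H -> 'I_A}) ind R (good s) a = 1.
Proof.
rewrite (bigD1 [ffun i => a (ord0, i)]) //= big1 ?addr0.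
  rewrite /ind (_ : good _ a = true) //; apply/forallP => i; by rewrite ffunE.
move=> s hs; rewrite /ind.
rewrite (_ : good s a = false) //.
apply/negbTE; apply: contra hs => /forallP h; apply/eqP/ffunP => i.
by rewrite ffunE (eqP (h i)).
Qed.

Theorem theorem3 :
  forall R : realType, exists c : R, 0 < c /\
    forall (H A T : nat), (0 < H)%N -> (1 < A)%N ->
    forall alg : algorithm R H A, valid_alg alg ->
    exists M : mdp R H A, valid_mdp M /\
      c * Num.min (Num.sqrt ((A ^ H * T)%N%:R)) T%:R <= exp_regret M alg T [::].
Proof.
move=> R; exists (1/120); split; first lra.
move=> H A T Hpos HA alg Halg.
have alg_ge0 : forall h a, 0 <= alg h a by move=> h a; case: (Halg h).
have alg_sum1 : forall h, \sum_a alg h a = 1 by move=> h; case: (Halg h).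
pose sec0 : {ffun 'I_H -> 'I_A} := [ffun i => Ordinal (ltnW HA)].
have [T0|Tpos] := posnP T.
  have e00 : (0 : R) <= 0 by [].
  have e04 : (0 : R) <= 1/4 by lra.
  exists (mdpS Hpos sec0 0); split; first exact: valid_mdpS.
  rewrite T0 /= muln0 sqrtr0 minxx mulr0; exact: lexx.
have N2 : (2 <= A ^ H)%N.
  case: H Hpos {alg alg_ge0 alg_sum1 Halg sec0} => // H' _; rewrite expnS.
  by rewrite -[2%N]muln1 leq_mul // expn_gt0 ltnW.
have [Nr eNr] : exists Nr : R, Nr = (A ^ H)%N%:R by eexists.
have Nr2 : 2 <= Nr by rewrite eNr (ler_nat R 2).
have Tr : 0 < T%:R :> R by rewrite ltr0n.
set e2 : R := Num.min (1/16) (Nr / (512 * T%:R)).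
have e2ge0 : 0 <= e2.
  rewrite /e2 le_min; apply/andP; split; first lra.
  by rewrite divr_ge0 // ?mulr_ge0 // ?ler0n // (le_trans _ Nr2).
have e2le : e2 <= 1/16 by rewrite /e2 ge_min lexx.
set e := Num.sqrt e2.
have ee : e ^+ 2 = e2 by rewrite sqr_sqrtr.
have e0 : 0 <= e := sqrtr_ge0 _.
have e4 : e <= 1/4.
  have : e ^+ 2 <= 1/16 by rewrite ee.
  move: e0; rewrite expr2; nra.
have Te2 : T%:R * e ^+ 2 <= Nr / 512.
  rewrite ee; have : e2 <= Nr / (512 * T%:R) by rewrite /e2 ge_min lexx orbT.
  move=> h; apply: le_trans (ler_wpM2l (ltW Tr) h) _.
  rewrite le_eqVlt; apply/orP; left; apply/eqP; field; rewrite gt_eqF //.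
pose X s := cum alg (mu s e) (ind R (good s)) T [::].
pose Y s := cum alg (fun _ => 1/2 : R) (ind R (good s)) T [::].
pose reg s := exp_regret (mdpS Hpos s e) alg T [::].
have regE : forall s, reg s = e * T%:R - e * X s.
  move=> s; rewrite /reg exp_regret_cum //.
  rewrite (@cum_ext _ _ alg (mu s e) _ (fun a => e + (-e) * ind R (good s) a)); last first.
    by move=> a; rewrite /ind; ring.
  rewrite (cum_affine alg_sum1) /X; ring.
have key : forall s, X s - Y s <= 64 * T%:R * e ^+ 2 * Y s + (X s + Y s) / 8.
  by move=> s; apply: (@per_s R H A T alg e s alg_ge0 alg_sum1 e0 e4).
have sumY : \sum_s Y s = T%:R.
  rewrite /Y -(cum_sum alg _ (fun s a => ind R (good s) a)).
  rewrite (@cum_ext _ _ alg _ _ (fun a => 1 + 0 * (fun _ => 0 : R) a)); last first.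
    by move=> a; rewrite sum_good; ring.
  rewrite (cum_affine alg_sum1); ring.
have sumX : 7/8 * \sum_s X s <= (9/8 + 64 * (T%:R * e ^+ 2)) * T%:R.
  rewrite mulr_sumr -sumY mulr_sumr; apply: ler_sum => s _.
  have := key s; move=> k; nra.
have cardS : #|{ffun 'I_H -> 'I_A}| = (A ^ H)%N by rewrite card_ffun !card_ord.
have cst : forall c : R, \sum_(s : {ffun 'I_H -> 'I_A}) c = c * Nr.
  by move=> c; rewrite sumr_const cardS eNr mulr_natr.
have sumReg : \sum_s reg s = e * (Nr * T%:R - \sum_s X s).
  rewrite (eq_bigr _ (fun s _ => regE s)) sumrB cst -mulr_sumr; rewrite mulrBr; congr (_ - _); by rewrite -mulrA [T%:R * Nr]mulrC.
have hX : \sum_s X s <= 11/14 * (Nr * T%:R).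
  have h1 := ler_wpM2r (ltW Tr) Te2.
  have h2 := ler_wpM2r (ltW Tr) Nr2.
  nra.
set b := 3/14 * e * T%:R.
have Hsum : b * Nr <= \sum_s reg s.
  rewrite sumReg; have := ler_wpM2l e0 (lerB (lexx (Nr * T%:R)) hX).
  move=> h; apply: le_trans h; rewrite /b le_eqVlt; apply/orP; left; apply/eqP; by field.
have [s hs] : exists s, b <= reg s.
  suff /existsP [s hs] : [exists s, b <= reg s] by exists s.
  apply: contraT => /existsPn hall.
  have : \sum_s reg s < \sum_(s : {ffun 'I_H -> 'I_A}) b.
    apply: ltr_sum; first by apply/hasP; exists sec0 => //; exact: mem_index_enum.
    by move=> s _; move: (hall s); rewrite -ltNge.
  by rewrite cst ltNge Hsum.
exists (mdpS Hpos s e); split; first exact: valid_mdpS.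
rewrite -/(reg s) natrM -eNr.
set m := Num.min _ _.
have m0 : 0 <= m by rewrite le_min sqrtr_ge0 ler0n.
have mT : m <= T%:R by rewrite ge_min lexx orbT.
have mS : m <= Num.sqrt (Nr * T%:R) by rewrite ge_min lexx.
have NT0 : 0 <= Nr * T%:R by rewrite mulr_ge0 // ltW // (lt_le_trans _ Nr2).
have sq := sqr_sqrtr NT0.
have m2 : m ^+ 2 <= 529 * (e ^+ 2 * T%:R ^+ 2).
  rewrite ee /e2 minEle; case: ifP => _.
    have : m ^+ 2 <= T%:R ^+ 2 by rewrite !expr2; nra.
    nra.
  have : m ^+ 2 <= Nr * T%:R.
    rewrite -sq !expr2; have := sqrtr_ge0 (Nr * T%:R); nra.
  have -> : Nr / (512 * T%:R) * T%:R ^+ 2 = Nr * T%:R / 512 by field; rewrite gt_eqF.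
  nra.
have eT : 0 <= e * T%:R by rewrite mulr_ge0 // ler0n.
have m23 : m <= 23 * (e * T%:R).
  move: m2; rewrite !expr2; nra.
apply: le_trans hs; rewrite /b; nra.
Qed.
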